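(* Let $r\in\mathbb Z_n$ and $1\le j\le\frac{n-1}2$, write $\mathcal U_k=\mathcal U_k(q^j+q^{-j})$, and let $\mathbf v=[1\ q^{2r}\ \cdots\ q^{2(n-1)r}]^T$. Put $\mathbf x_0=\mathbf v$ and for $1\le k\le n-1$ $$\mathbf x_k=q^{kr}\mathcal U_k\mathbf v+q^{(k-1)r}\sum_{s=0}^{\lfloor (k-1)/2\rfloor}(k-2s)\,\mathcal U_{k-1-2s}\mathbf v.$$ Then $\mathbf x_{j,r}=[\mathbf x_0;\dots;\mathbf x_{n-1}]$ satisfies $M\mathbf x_{j,r}=\lambda_{j,r}\mathbf x_{j,r}+\mathbf v_{j,r}$, where $\lambda_{j,r}=q^r(q^j+q^{-j})$ and $\mathbf v_{j,r}=[\mathbf v;\,q^r\mathcal U_1\mathbf v;\,\dots;\,q^{(n-1)r}\mathcal U_{n-1}\mathbf v]$ is a (nonzero) right eigenvector of $M$ with eigenvalue $\lambda_{j,r}$.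
   Context: $n\ge3$ odd, $q$ a primitive $n$-th root of unity in $\mathbb C$. $I$ is the $n\times n$ identity, $Z$ the $n\times n$ cyclic permutation matrix with $(Zu)_i=u_{i+1}$ (indices mod $n$). $M$ is the $n^2\times n^2$ block matrix of $n\times n$ blocks $M_{ab}$ ($0\le a,b\le n-1$) with $M_{a,a+1}=I$ ($0\le a\le n-2$), $M_{a,a-1}=Z$ ($1\le a\le n-2$), $M_{n-1,0}=2I$, $M_{n-1,n-2}=2Z$, other blocks zero (the McKay matrix of the $D_n$-module $V(2,0)$). $\mathcal U_k(t)$: $\mathcal U_0=1$, $\mathcal U_1=t$, $\mathcal U_k=t\mathcal U_{k-1}-\mathcal U_{k-2}$. Vectors in $\mathbb C^{n^2}$ are written as stacks of $n$ blocks of length $n$. *)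

(* Defs.v *)
From HB Require Import structures.
From mathcomp Require Import all_boot all_order all_algebra.
Set Implicit Arguments. Unset Strict Implicit. Unset Printing Implicit Defensive.
Import Order.TTheory GRing.Theory Num.Theory.
Local Open Scope ring_scope.

Section Defs.
Variable C : numClosedFieldType.

Fixpoint Ucheb (k : nat) (t : C) : C :=
  match k with
  | 0 => 1
  | 1 => t
  | (k'.+1 as k1).+1 => t * Ucheb k1 t - Ucheb k' t
  end.

Definition Zcyc (n : nat) : 'M[C]_n :=
  \matrix_(i < n, k < n) ((val k == (i.+1 %% n)%N)%:R).

Definition Mblock (n : nat) (a c : 'I_n) : 'M[C]_n :=
  if (val a < n.-1)%N then
    (if val c == (val a).+1 then 1%:M
     else if (0 < val a)%N && (val c == (val a).-1) then Zcyc n else 0)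
  else
    (if val c == 0%N then 2%:M
     else if val c == n.-2 then 2 *: Zcyc n else 0).

Definition Mmat (n : nat) := \mxblock_(a < n, c < n) Mblock a c.

Definition vvec (n : nat) (q : C) (r : nat) : 'cV[C]_n :=
  \col_(i < n) q ^+ (2 * i * r).

(* the k-th block x_k of x_{j,r}, with t = q^j + q^{-j} *)
Definition xblock (n : nat) (q t : C) (r k : nat) : 'cV[C]_n :=
  if k == 0%N then vvec n q r
  else q ^+ (k * r) * Ucheb k t *: vvec n q r
       + q ^+ (k.-1 * r) *:
         \sum_(s < (k.-1)./2.+1) (((k - 2 * s)%N)%:R * Ucheb (k - 1 - 2 * s) t) *: vvec n q r.

Definition xjr (n : nat) (q t : C) (r : nat) :=
  \mxcol_(k < n) xblock n q t r k.

Definition vjr (n : nat) (q t : C) (r : nat) :=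
  \mxcol_(k < n) ((q ^+ (k * r) * Ucheb k t) *: vvec n q r).

End Defs.

(* Main.v *)
Require Import Defs.
From HB Require Import structures.
From mathcomp Require Import all_boot all_order all_algebra.
From mathcomp Require Import ring zify.
Import Order.TTheory GRing.Theory Num.Theory.
Local Open Scope ring_scope.

Section S.
Variable C : numClosedFieldType.

Lemma lincomb (X Y a W : C) : X - Y = a * (W - 1) -> W = 1 -> X = Y.
Proof. by move=> h e; apply/eqP; rewrite -subr_eq0 h e subrr mulr0. Qed.

Lemma Ucl (x y : C) k : x * y = 1 ->
  (x - y) * Ucheb k (x + y) = x ^+ k.+1 - y ^+ k.+1.
Proof.
move=> hxy.
suff: (x - y) * Ucheb k (x + y) = x ^+ k.+1 - y ^+ k.+1 /\
      (x - y) * Ucheb k.+1 (x + y) = x ^+ k.+2 - y ^+ k.+2 by case.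
elim: k => [|k [IH1 IH2]]; first by split => /=; ring.
split => //.
have -> : (x - y) * Ucheb k.+2 (x + y) =
   (x + y) * ((x - y) * Ucheb k.+1 (x + y)) - (x - y) * Ucheb k (x + y).
  by rewrite /=; ring.
rewrite IH1 IH2 !exprS; move: (x ^+ k) (y ^+ k) => X Y.
apply: (lincomb _ _ (x * X - y * Y) _ _ hxy); ring.
Qed.
Lemma lincomb2 (X Y a W W' : C) : X - Y = a * (W - W') -> W = W' -> X = Y.
Proof. by move=> h e; apply/eqP; rewrite -subr_eq0 h e subrr mulr0. Qed.

Definition Ssum (t : C) k := \sum_(s < (k.-1)./2.+1) (((k - 2 * s)%N)%:R * Ucheb (k - 1 - 2 * s) t).

Arguments Ssum : simpl never.

Lemma S0 t : Ssum t 0 = 0.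
Proof. by rewrite /Ssum big_ord1 /= mul0r. Qed.
Lemma S1 t : Ssum t 1 = 1.
Proof. by rewrite /Ssum big_ord1 /= mul1r. Qed.
Lemma S2rec t k : Ssum t k.+2 = Ssum t k + (k.+2)%:R * Ucheb k.+1 t.
Proof.
case: k => [|k]; first by rewrite S0 add0r /Ssum big_ord1 /=.
rewrite /Ssum /= big_ord_recl /= addrC; congr (_ + _).
apply: eq_bigr => s _; rewrite /bump leq0n add1n.
have -> : (k.+3 - 2 * s.+1 = k.+1 - 2 * s)%N by lia.
by have -> : (k.+3 - 1 - 2 * s.+1 = k.+1 - 1 - 2 * s)%N by lia.
Qed.

Lemma I1 t m : Ssum t m.+2 + Ssum t m = t * Ssum t m.+1 + Ucheb m.+1 t.
Proof.
suff: (Ssum t m.+2 + Ssum t m = t * Ssum t m.+1 + Ucheb m.+1 t) /\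
      (Ssum t m.+3 + Ssum t m.+1 = t * Ssum t m.+2 + Ucheb m.+2 t) by case.
elim: m => [|m [IH1 IH2]].
  rewrite !S2rec S0 S1 /=; split; ring.
split => //.
move: IH1; rewrite !S2rec; move: (Ssum t m) (Ssum t m.+1) => A B /= IH1.
apply: (lincomb2 _ _ 1 _ _ _ IH1); ring.
Qed.
Lemma sum_delta n m (F : nat -> C) : (m < n)%N ->
  \sum_(c < n) ((val c == m)%:R * F c) = F m.
Proof.
move=> H; rewrite (bigD1 (Ordinal H)) //= eqxx mul1r big1 ?addr0 // => c Hc.
rewrite (_ : (val c == m) = false) ?mul0r //; apply/negbTE; apply: contra Hc => /eqP e.
by apply/eqP/val_inj.
Qed.

Lemma sum_delta' n m K (F : nat -> C) : (m < n)%N ->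
  \sum_(c < n) ((val c == m)%:R * K * F c) = K * F m.
Proof.
move=> H; rewrite -(@sum_delta n m (fun c => K * F c) H).
by apply: eq_bigr => c _; rewrite mulrA.
Qed.

Lemma qmod n (q : C) a b : q ^+ n = 1 -> a = b %[mod n] -> q ^+ a = q ^+ b.
Proof.
move=> qn e; have h k : q ^+ (k * n) = 1 by rewrite mulnC exprM qn expr1n.
by rewrite (divn_eq a n) (divn_eq b n) e !exprD !h.
Qed.

Lemma Zv n (q : C) (r : nat) : (0 < n)%N -> q ^+ n = 1 ->
  Zcyc C n *m vvec n q r = (q ^+ r) ^+ 2 *: vvec n q r.
Proof.
move=> n0 qn; apply/matrixP => i k; rewrite !mxE.
rewrite (eq_bigr (fun l : 'I_n => ((val l == (i.+1 %% n)%N)%:R * q ^+ (2 * l * r)))); last first.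
  by move=> l _; rewrite !mxE.
rewrite (@sum_delta n _ (fun l => q ^+ (2 * l * r))) ?ltn_pmod //.
rewrite -exprM -exprD; apply: (@qmod n q _ _ qn).
rewrite mulnAC mulnC modnMml.
by have -> : (i.+1 * (2 * r) = r * 2 + 2 * i * r)%N by nia.
Qed.

Definition gfun n (Q : C) (f : nat -> C) (a : nat) : C :=
  if (a < n.-1)%N then f a.+1 + ((0 < a)%N)%:R * Q ^+ 2 * f a.-1
  else 2 * f 0%N + 2 * Q ^+ 2 * f n.-2.

Definition mcoef n (Q : C) (a c : nat) : C :=
  if (a < n.-1)%N then (c == a.+1)%:R * 1 + (((0 < a)%N) && (c == a.-1))%:R * Q ^+ 2
  else (c == 0)%:R * 2 + (c == n.-2)%:R * (2 * Q ^+ 2).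

Lemma blockM n (q : C) (r : nat) (f : nat -> C) : (3 <= n)%N -> q ^+ n = 1 ->
  Mmat C n *m \mxcol_(k < n) (f k *: vvec n q r) =
  \mxcol_(a < n) (gfun n (q ^+ r) f a *: vvec n q r).
Proof.
move=> n3 qn; have hZ := @Zv n q r (ltnW (ltnW n3)) qn.
rewrite /Mmat mul_mxblock_mxrow; apply: eq_mxcol => a.
rewrite (eq_bigr (fun c : 'I_n => (mcoef n (q ^+ r) a c * f c) *: vvec n q r)); last first.
  move=> c _; rewrite /Mblock /mcoef; case: ifP => ha.
    have [hc|hc] := eqVneq (val c) (val a).+1.
      have hne : ((val a).+1 == (val a).-1) = false by apply/eqP; lia.
      by rewrite hc hne andbF mul0r addr0 mulr1 mul1r mul1mx.
    case: ifP => hc2.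
      rewrite -scalemxAr hZ scalerA; congr (_ *: _); by rewrite /=; ring.
    by rewrite mul0mx !mul0r add0r mul0r scale0r.
  have [hc|hc] := eqVneq (val c) 0%N.
    have hne : (0 == n.-2)%N = false by apply/eqP; lia.
    by rewrite hc hne mul0r addr0 mul1r mul_scalar_mx scalerA.
  case: ifP => hc2.
    by rewrite -scalemxAl -scalemxAr hZ !scalerA; congr (_ *: _); rewrite /=; ring.
  by rewrite mul0mx !mul0r add0r mul0r scale0r.
rewrite -scaler_suml; congr (_ *: _).
rewrite /mcoef /gfun; case: ifP => ha.
  under eq_bigr do rewrite mulrDl mulr1.
  rewrite big_split /= sum_delta; last by lia.
  congr (_ + _); case: (ltnP 0 a) => a0.
    under eq_bigr do rewrite andTb.
    by rewrite sum_delta' /= ?mul1r //; lia.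
  by rewrite big1 /= ?mul0r // => c _; rewrite /= !mul0r.
under eq_bigr do rewrite mulrDl.
rewrite big_split /= !sum_delta' //; lia.
Qed.

Lemma lincomb3 (X Y a W W' b V V' : C) : X - Y = a * (W - W') + b * (V - V') ->
  W = W' -> V = V' -> X = Y.
Proof. by move=> h e e'; apply/eqP; rewrite -subr_eq0 h e e' !subrr !mulr0 addr0. Qed.

Lemma mxcolZ n m (a : C) (B : 'I_m -> 'M[C]_(n,1)) :
  a *: \mxcol_(i < m) B i = \mxcol_(i < m) (a *: B i).
Proof. by apply/matrixP => i j; rewrite !mxE. Qed.

Lemma mxcolD' n m (A B : 'I_m -> 'M[C]_(n,1)) :
  \mxcol_(i < m) A i + \mxcol_(i < m) B i = \mxcol_(i < m) (A i + B i).
Proof. by apply/matrixP => i j; rewrite !mxE. Qed.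
End S.
Arguments Ssum {C} t k : simpl never.

Theorem mainTheorem13 (C : numClosedFieldType) (n : nat) (q : C) (r : 'I_n) (j : nat) :
  odd n -> (3 <= n)%N -> n.-primitive_root q ->
  (1 <= j)%N -> (j <= (n.-1)./2)%N ->
  let t := q ^+ j + (q ^+ j)^-1 in
  let lambda := q ^+ r * t in
  Mmat C n *m xjr n q t r = lambda *: xjr n q t r + vjr n q t r /\
  Mmat C n *m vjr n q t r = lambda *: vjr n q t r /\
  vjr n q t r != 0.
Proof.
move=> on n3 prim j1 jle t lam.
have qn := prim_expr_order prim.
set Q := q ^+ r.
have QN : Q ^+ n = 1 by rewrite /Q -exprM mulnC exprM qn expr1n.
have eQ k : q ^+ (k * r) = Q ^+ k by rewrite /Q mulnC exprM.
set x := q ^+ j.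
have q0 : q != 0.
  apply/eqP => q0; move: qn; rewrite q0 expr0n (_ : (n == 0)%N = false); last by lia.
  by move/eqP; rewrite /= eq_sym oner_eq0.
have x0 : x != 0 by rewrite expf_neq0.
have hxy : x * x^-1 = 1 := mulfV x0.
have xn : x ^+ n = 1 by rewrite /x exprAC qn expr1n.
have yn : x^-1 ^+ n = 1 by rewrite exprVn xn invr1.
have xy0 : x - x^-1 != 0.
  apply/negP => /eqP/(congr1 (fun z => z * x)); rewrite mulrBl mulVf // mul0r => /eqP.
  rewrite subr_eq0 -expr2 /x -exprM => /eqP h.
  have : (n %| j * 2)%N by rewrite (prim_order_dvd prim) h.
  move/dvdn_leq; rewrite muln_gt0 j1 /= => /(_ isT).
  by move: jle; rewrite geq_half_double -muln2; lia.
have Un1 : Ucheb n.-1 t = 0.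
  have := @Ucl C x x^-1 n.-1 hxy; rewrite prednK; last by lia.
  by rewrite xn yn subrr => /eqP; rewrite mulf_eq0 (negbTE xy0) /= => /eqP.
have Un : Ucheb n t = 1.
  have := @Ucl C x x^-1 n hxy; rewrite !exprS xn yn !mulr1 => h.
  by apply: (mulfI xy0); rewrite h mulr1.
have [m hm] : exists m, n = m.+3 by exists (n - 3)%N; lia.
subst n.
have Um2 : Ucheb m.+2 t = 0 by [].
have Um1 : Ucheb m.+1 t = -1.
  have e : Ucheb m.+3 t = t * Ucheb m.+2 t - Ucheb m.+1 t by [].
  by move: Un; rewrite e Um2 mulr0 sub0r => /eqP; rewrite eqr_oppLR => /eqP.
have QN' : Q * (Q * (Q * Q ^+ m)) = 1 by rewrite -!exprS.
have hx : xjr m.+3 q t r = \mxcol_(k < m.+3)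
    ((Q ^+ k * Ucheb k t + Q ^+ k.-1 * Ssum t k) *: vvec m.+3 q r).
  rewrite /xjr; apply: eq_mxcol => k; rewrite /xblock; case: eqP => [->|_].
    by rewrite S0 expr0 mulr0 addr0 mul1r scale1r.
  by rewrite -scaler_suml scalerA !eQ scalerDl.
have hv : vjr m.+3 q t r = \mxcol_(k < m.+3) ((Q ^+ k * Ucheb k t) *: vvec m.+3 q r).
  by apply: eq_mxcol => k; rewrite eQ.
rewrite hx hv (@blockM C _ q r (fun k => Q ^+ k * Ucheb k t + Q ^+ k.-1 * Ssum t k)) //.
rewrite (@blockM C _ q r (fun k => Q ^+ k * Ucheb k t)) // !mxcolZ mxcolD'.
split; [|split].
- apply: eq_mxcol => a; rewrite scalerA -scalerDl; congr (_ *: _).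
  rewrite /gfun /lam -/Q; move: (nat_of_ord a) (ltn_ord a) => k hk.
  case: (ltnP k m.+2) => hk2.
    case: k hk hk2 => [|[|k]] hk hk2.
    + by rewrite S0 S1 /=; ring.
    + by rewrite S2rec S0 S1 /=; ring.
    + have := I1 _ t k.+1.
      move: (Ssum t k.+1) (Ssum t k.+2) (Ssum t k.+3) => A B D /= h.
      rewrite !exprS; move: (Q ^+ k) => P.
      apply: (lincomb2 _ _ _ (Q * (Q * P)) _ _ _ h); ring.
  have -> : k = m.+2 by lia.
  have hS : t * Ssum t m.+2 = 2 * Ssum t m.+1.
    by have := I1 _ t m.+1; rewrite S2rec Um2 mulr0 !addr0 => <-; ring.
  rewrite Um2 Um1 S0 /=.
  move: (Ssum t m.+1) (Ssum t m.+2) hS => A B hS.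
  rewrite !exprS; move: (Q ^+ m) QN' => P QN'.
  apply: (lincomb3 _ _ _ (-2) _ _ (- (Q * (Q * P))) _ _ _ QN' hS); ring.
- apply: eq_mxcol => a; rewrite scalerA; congr (_ *: _).
  rewrite /gfun /lam -/Q; move: (nat_of_ord a) (ltn_ord a) => k hk.
  case: (ltnP k m.+2) => hk2.
    case: k hk hk2 => [|k] hk hk2.
    + by rewrite /=; ring.
    + rewrite /= !exprS; move: (Q ^+ k) => P; ring.
  have -> : k = m.+2 by lia.
  rewrite Um2 Um1 /= !exprS; move: (Q ^+ m) QN' => P QN'.
  apply: (lincomb2 _ _ _ (-2) _ _ _ QN'); ring.
- apply/eqP => h.
  have := congr1 (fun A => submxcol A (@ord0 m.+2)) h.
  rewrite mxcolK submxcol0 => /matrixP /(_ ord0 ord0).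
  by rewrite !mxE /= muln0 mul0n !expr0 !mul1r => /eqP; rewrite oner_eq0.
Qed.
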